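(* Let $\Upsilon$ be a finite tree with vertex set $\mathbf{x}$ whose edges $e$ are labeled by odd integers $m_e\ge 1$. Then there exists a labeled oriented tree $\Gamma$ of Coxeter type with vertex set $\mathbf{x}$, which can moreover be chosen to be prime, whose associated Coxeter tree is $\Upsilon$. In particular, $G(\Gamma)$ maps onto the Coxeter group $W(\Upsilon)$ (via $x\mapsto x$).
   Context: A labeled oriented tree (LOT) $\Gamma$ is a finite tree with vertex set $\mathbf{x}$ whose edges are oriented and each edge is labeled by a (possibly empty) word $w$ in $\mathbf{x}^{\pm1}$; $e=(x\xrightarrow{w}y)$ denotes the edge from $x$ to $y$ labeled $w$. Its presentation is $P(\Gamma)=\langle \mathbf{x}\mid r_e\rangle$ with $r_e=xw(wy)^{-1}$, and $G(\Gamma)$ is the group it defines. $\Gamma$ is of Coxeter type if for every edge $e=(x\xrightarrow{w}y)$ every letter $z\ne x,y$ occurs in $w$ only with even exponents. For such $\Gamma$, each $r_e$ reduces, up to cyclic permutation, in $\langle\mathbf{x}\mid x^2, x\in\mathbf{x}\rangle$ to $(yx)^{m_e}$ with $m_e\ge1$ odd; the associated Coxeter tree is obtained from $\Gamma$ by erasing orientations and edge words and labeling each edge $e$ by $m_e$. For an edge-labeled graph $\Upsilon$ on $\mathbf{x}$, $W(\Upsilon)=\langle \mathbf{x}\mid x^2\ (x\in\mathbf{x}),\ (xy)^{m_e}\text{ for each edge }e=\{x,y\}\rangle$. A subLOT of $\Gamma$ is a subtree $\Gamma'$ such that all letters occurring in the labels of edges of $\Gamma'$ are vertices of $\Gamma'$;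 $\Gamma$ is prime if it has no proper subLOT, where proper means neither all of $\Gamma$ nor a single vertex. *)

(* Defs.v *)
From mathcomp Require Import all_boot.
Set Implicit Arguments. Unset Strict Implicit. Unset Printing Implicit Defensive.

Section LOT.
Variable V : finType.

(* A letter of a word in x^{+-1}: (generator, true = positive exponent). *)
Definition word := seq (V * bool).

(* A LOT: list of oriented labeled edges (x, w, y) = x --w--> y. *)
Definition LOT := seq (V * word * V).

(* An edge-labeled graph: list of edges ({a,b}, m). *)
Definition labgraph := seq (V * V * nat).

Definition lot_ends (G : LOT) : seq (V * V) := [seq (e.1.1, e.2) | e <- G].
Definition lab_ends (U : labgraph) : seq (V * V) := [seq (f.1.1, f.1.2) | f <- U].

Definition adj (es : seq (V * V)) : rel V :=
  fun a b => ((a, b) \in es) || ((b, a) \in es).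

Definition is_tree (es : seq (V * V)) : Prop :=
  0 < #|V| /\ size es = #|V|.-1 /\ forall a b : V, connect (adj es) a b.

Fixpoint runs (s : seq V) : seq (V * nat) :=
  match s with
  | [::] => [::]
  | a :: t =>
      match runs t with
      | (b, k) :: r => if a == b then (a, k.+1) :: r else (a, 1) :: (b, k) :: r
      | [::] => [:: (a, 1)]
      end
  end.

(* Coxeter type edge: every letter z <> x, y occurs in w only in syllables
   z^k with k even (the parity of the exponent sum of a syllable equals the
   parity of its length). *)
Definition coxeter_type_edge (e : V * word * V) : bool :=
  all (fun p : V * nat => (p.1 == e.1.1) || (p.1 == e.2) || ~~ odd p.2)
      (runs (map fst e.1.2)).

(* image of the relator r_e = x w y^{-1} w^{-1} in <x | x^2> (signs dropped) *)
Definition rel_letters (e : V * word * V) : seq V :=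
  e.1.1 :: map fst e.1.2 ++ e.2 :: rev (map fst e.1.2).

(* normal form in the free product of copies of Z/2 *)
Fixpoint zred (s : seq V) : seq V :=
  match s with
  | [::] => [::]
  | a :: t =>
      match zred t with
      | b :: u => if a == b then u else a :: b :: u
      | [::] => [:: a]
      end
  end.

Fixpoint cyc_aux (n : nat) (s : seq V) : seq V :=
  match n with
  | 0 => s
  | n'.+1 =>
      match s with
      | a :: (_ :: _) as t =>
          if a == last a t then cyc_aux n' (take (size t).-1 t) else s
      | _ => s
      end
  end.

(* cyclic reduction in <x | x^2, x in V> *)
Definition cycred (s : seq V) : seq V := let r := zred s in cyc_aux (size r) r.

Definition alt_pow (y x : V) (m : nat) : seq V := flatten (nseq m [:: y; x]).

Definition reduces_to (e : V * word * V) (m : nat) : Prop :=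
  exists k, rot k (cycred (rel_letters e)) = alt_pow e.2 e.1.1 m.

Definition coxeter_tree_of (G : LOT) (Ups : labgraph) : Prop :=
  (forall e, e \in G -> exists m,
       (((e.1.1, e.2, m) \in Ups) \/ ((e.2, e.1.1, m) \in Ups)) /\ reduces_to e m)
  /\ (forall f, f \in Ups -> exists e, e \in G /\
       ((e.1.1, e.2) = (f.1.1, f.1.2) \/ (e.1.1, e.2) = (f.1.2, f.1.1))).

(* subLOT with vertex set U: U nonempty, the subgraph of G spanned by U is
   connected (hence a subtree, G being a tree), and all letters in the labels
   of its edges lie in U. *)
Definition subLOT (G : LOT) (U : {set V}) : Prop :=
  U != set0 /\
  (forall a b, a \in U -> b \in U ->
     connect [rel c d | [&& c \in U, d \in U & adj (lot_ends G) c d]] a b) /\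
  (forall e, e \in G -> e.1.1 \in U -> e.2 \in U -> all (fun p => p.1 \in U) e.1.2).

Definition prime_LOT (G : LOT) : Prop :=
  forall U : {set V}, subLOT G U -> U = setT \/ #|U| = 1.

(* word equality in W(Ups) = < V | x^2, (ab)^m for ({a,b},m) in Ups >:
   the congruence on words generated by the relators *)
Inductive weq (Ups : labgraph) : seq V -> seq V -> Prop :=
| weq_refl s : weq Ups s s
| weq_sym s t : weq Ups s t -> weq Ups t s
| weq_trans s t u : weq Ups s t -> weq Ups t u -> weq Ups s u
| weq_sq u v x : weq Ups (u ++ x :: x :: v) (u ++ v)
| weq_cox u v a b m : (a, b, m) \in Ups ->
    weq Ups (u ++ alt_pow a b m ++ v) (u ++ v).

End LOT.

(* Main.v *)
Require Import Defs.
From mathcomp Require Import all_boot.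
From mathcomp Require Import zify.

Set Implicit Arguments. Unset Strict Implicit. Unset Printing Implicit Defensive.

Section Aux.
Variable V : finType.
Implicit Types (x y z : V) (s t : seq V).

Definition sqs s := flatten [seq [:: z; z] | z <- s].

Lemma alt_S x y n : alt_pow x y n.+1 = x :: y :: alt_pow x y n.
Proof. by []. Qed.

Lemma alt_add x y a b : alt_pow x y (a + b) = alt_pow x y a ++ alt_pow x y b.
Proof. by rewrite /alt_pow nseqD flatten_cat. Qed.

Lemma alt_rcons x y n : alt_pow x y n.+1 = alt_pow x y n ++ [:: x; y].
Proof. by rewrite -addn1 alt_add. Qed.

Lemma alt_swap x y n : x :: alt_pow y x n = alt_pow x y n ++ [:: x].
Proof. elim: n => [//|n IH]. by rewrite !alt_S /= -IH. Qed.

Lemma alt_rev x y n : rev (alt_pow x y n) = alt_pow y x n.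
Proof.
elim: n => [//|n IH]. rewrite alt_S !rev_cons IH alt_rcons -!cats1 -catA. by [].
Qed.

Lemma alt_mid x y k :
  x :: alt_pow y x k ++ y :: rev (alt_pow y x k) = alt_pow x y (k.*2.+1).
Proof.
rewrite alt_rev -cat_cons alt_swap -catA /=.
have -> : k.*2.+1 = k + (1 + k) by rewrite add1n addnS addnn.
by rewrite !alt_add.
Qed.

Fixpoint red s := match s with a :: ((b :: _) as t) => (a != b) && red t | _ => true end.

Lemma red2 a b t : red (a :: b :: t) = (a != b) && red (b :: t).
Proof. by []. Qed.

Lemma red_alt x y n : x != y -> red (alt_pow x y n) /\ red (y :: alt_pow x y n).
Proof.
move=> xy; elim: n => [//|n [IH1 IH2]].
rewrite alt_S; split.
- by rewrite red2 xy IH2.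
- by rewrite red2 eq_sym xy red2 xy IH2.
Qed.

Lemma zred_red s : red (zred s).
Proof.
elim: s => [//|a t IH] /=.
case E: (zred t) IH => [|b u] IH //.
case: ifP => ab.
- by case: u IH {E} => //= c u /andP[].
- by rewrite red2 ab IH.
Qed.

Lemma zred_cons a t : zred (a :: t) =
  match zred t with b :: u => if a == b then u else a :: b :: u | [::] => [:: a] end.
Proof. by []. Qed.

Lemma zred_id s : red s -> zred s = s.
Proof.
elim: s => [//|a t IH].
case: t IH => [//|b u] IH /andP[ab Rt].
by rewrite zred_cons IH // (negbTE ab).
Qed.

Lemma zred_cat p t : zred (p ++ t) = zred (p ++ zred t).
Proof.
elim: p => [|a p IH]; first by rewrite /= [RHS]zred_id // zred_red.
by rewrite !cat_cons zred_cons IH -zred_cons.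
Qed.

Lemma zred_sq z t : zred (z :: z :: t) = zred t.
Proof.
rewrite !zred_cons. have := zred_red t. case: (zred t) => [|b u] /=; first by rewrite eqxx.
case: ifP => [/eqP <-|zb] H.
- case: u H => [|c u] //= /andP[zc _]. by rewrite (negbTE zc).
- by rewrite eqxx.
Qed.

Lemma sqs_cons z s t : sqs (z :: s) ++ t = z :: z :: (sqs s ++ t).
Proof. by []. Qed.

Lemma zred_sqs s t : zred (sqs s ++ t) = zred t.
Proof. elim: s => [//|z s IH]. by rewrite sqs_cons zred_sq IH. Qed.

Lemma sqs_cat s t : sqs (s ++ t) = sqs s ++ sqs t.
Proof. by rewrite /sqs map_cat flatten_cat. Qed.

Lemma rev_sqs s : rev (sqs s) = sqs (rev s).
Proof.
elim: s => [//|z s IH].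
rewrite -[sqs (z :: s)]cats0 sqs_cons cats0 !rev_cons IH -!cats1 sqs_cat.
by rewrite -catA.
Qed.

Lemma mem_sqs z s : z \in s -> z \in sqs s.
Proof.
elim: s => [//|a s IH]; rewrite in_cons => /orP[/eqP->|H].
- by rewrite -[sqs _]cats0 sqs_cons mem_head.
- by rewrite -[sqs _]cats0 sqs_cons cats0 !in_cons IH ?orbT.
Qed.

Lemma weq_sqs (Ups : labgraph V) u v s : weq Ups (u ++ sqs s ++ v) (u ++ v).
Proof.
elim: s => [|z s IH]; first exact: weq_refl.
apply: weq_trans IH. rewrite sqs_cons. exact: weq_sq.
Qed.

Lemma runs_cons a t : runs (a :: t) =
  match runs t with
  | (b, k) :: r => if a == b then (a, k.+1) :: r else (a, 1) :: (b, k) :: r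
  | [::] => [:: (a, 1)]
  end.
Proof. by []. Qed.

Lemma runs_head a t : exists k r, runs (a :: t) = (a, k) :: r.
Proof.
rewrite runs_cons; case: (runs t) => [|[b k] r]; first by exists 1, [::].
case: ifP => _; by eauto.
Qed.

Lemma runs_sq z t : (forall b u, t = b :: u -> b != z) ->
  runs (z :: z :: t) = (z, 2) :: runs t.
Proof.
case: t => [|b u] H; first by rewrite /= eqxx.
have [k [r E]] := runs_head b u.
have bz := H b u erefl.
rewrite (runs_cons z (z :: b :: u)) (runs_cons z (b :: u)) E.
by rewrite eq_sym (negbTE bz) eqxx.
Qed.

Lemma runs_all (Q : pred V) t : all Q t -> all (fun p => Q p.1) (runs t).
Proof.
elim: t => [//|a t IH] /andP[Qa Qt].
rewrite runs_cons; move: (IH Qt).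
case: (runs t) => [|[b k] r] /=; first by rewrite Qa.
case: ifP => _ /andP[Qb Qr] /=; by rewrite Qa ?Qb Qr.
Qed.

Lemma runs_sqs (P : pred (V * nat)) s t :
  (forall z, P (z, 2)) -> uniq s ->
  (forall b u, t = b :: u -> b \notin s) ->
  all P (runs t) -> all P (runs (sqs s ++ t)).
Proof.
move=> P2; elim: s => [//|z s IH]; rewrite cons_uniq => /andP[zs us] Ht Pt.
rewrite sqs_cons runs_sq.
- rewrite /= P2 IH //. move=> b u E; have := Ht b u E. by rewrite in_cons negb_or => /andP[].
- case: s {IH} zs us Ht => [|z' s'] /= zs us Ht b u.
  + move=> E; have := Ht b u E; by rewrite in_cons negb_or eq_sym => /andP[].
  + case=> <- _; move: zs; by rewrite in_cons negb_or eq_sym => /andP[].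
Qed.

Lemma connect_r (es : seq (V * V)) (r : V -> V) :
  (forall u v, adj es u v -> r u = r v) ->
  forall a b, connect (adj es) a b -> r a = r b.
Proof.
move=> Hr a b /connectP[p]; elim: p a => [|c p IH] a /=; first by move=> _ ->.
case/andP=> H1 H2 E. rewrite (Hr _ _ H1). exact: IH.
Qed.

Lemma cardU1_le (a : V) (A : {set V}) : #|a |: A| <= #|A|.+1.
Proof. rewrite cardsU1. by case: (a \notin A). Qed.

Lemma comp_bound (es : seq (V * V)) : exists r : V -> V,
  (forall u v, adj es u v -> r u = r v) /\
  #|V| <= #|r @: [set: V]| + count (fun p : V * V => p.1 != p.2) es.
Proof.
elim: es => [|[c d] es [r [Hr Hc]]].
  exists id; split => //. by rewrite card_imset // cardsT addn0.
exists (fun v => if r v == r d then r c else r v); split.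
  move=> u v; rewrite /adj !in_cons.
  case: (eqVneq (u, v) (c, d)) => [[-> ->]|_] /=.
    by move=> _; rewrite eqxx; case: ifP.
  case: (eqVneq (v, u) (c, d)) => [[-> ->]|_] /=.
    by move=> _; rewrite eqxx; case: ifP.
  by move=> H; rewrite (Hr u v H).
rewrite /=.
have : #|r @: [set: V]| <=
   #|[set (if r v == r d then r c else r v) | v in [set: V]]| + (c != d).
  case: (eqVneq c d) => [<-|cd] /=.
    rewrite addn0 (eq_imset (g := r)) // => v. by case: ifP => // /eqP.
  rewrite addn1.
  apply: (leq_trans (n := #|r d |: [set (if r v == r d then r c else r v) | v in [set: V]]|)).
    apply: subset_leq_card; apply/subsetP => w /imsetP[v _ ->].
    rewrite !inE; case: (eqVneq (r v) (r d)) => [->|nv]; first by [].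
    apply/orP; right; apply/imsetP; exists v => //. by rewrite (negbTE nv).
  exact: cardU1_le.
move=> H; apply: leq_trans Hc _; rewrite addnA leq_add2r; exact: H.
Qed.

Lemma tree_noloop (es : seq (V * V)) : is_tree es -> forall c d, (c, d) \in es -> c != d.
Proof.
move=> [V0 [Hs Hc]] c d Hin; apply/negP => /eqP E; subst d.
have [r [Hr Hb]] := comp_bound es.
have H1 : #|r @: [set: V]| <= 1.
  rewrite -(cards1 (r c)); apply: subset_leq_card; apply/subsetP => w /imsetP[v _ ->].
  by rewrite inE (connect_r Hr (Hc v c)).
have H2 : 0 < count (predC (fun p : V * V => p.1 != p.2)) es.
  rewrite -has_count; apply/hasP; exists (c, c) => //=. by rewrite eqxx.
have H3 := count_predC (fun p : V * V => p.1 != p.2) es.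
lia.
Qed.

End Aux.

Lemma alt_last_gen (V : finType) (x y : V) n d : last d (alt_pow x y n.+1) = y.
Proof. elim: n d => [//|n IH] d. rewrite alt_S. exact: IH. Qed.

Section Constr.
Variable V : finType.
Implicit Types (x y z : V).

Definition others x y := [seq z <- enum V | (z != x) && (z != y)].
Definition lab x y m : seq V := sqs (others x y) ++ alt_pow y x m./2.
Definition mkE (f : V * V * nat) : V * word V * V :=
  (f.1.1, [seq (z, true) | z <- lab f.1.1 f.1.2 f.2], f.1.2).

Lemma map_fst_w (l : seq V) : map fst [seq (z, true) | z <- l] = l.
Proof. by elim: l => //= a l ->. Qed.

Lemma rel_mkE x y m : rel_letters (mkE (x, y, m)) =
  x :: lab x y m ++ y :: rev (lab x y m).
Proof. by rewrite /rel_letters /= map_fst_w. Qed.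

Lemma odd_m m : odd m -> m = (m./2).*2.+1.
Proof. move=> om. by rewrite -{1}(odd_double_half m) om add1n. Qed.

Lemma rel_shape x y m :
  rel_letters (mkE (x, y, m)) =
  [:: x] ++ sqs (others x y) ++
  ((alt_pow y x m./2 ++ y :: rev (alt_pow y x m./2)) ++ sqs (rev (others x y)) ++ [::]).
Proof.
by rewrite rel_mkE /lab rev_cat rev_sqs cats0 /= -!catA.
Qed.

Lemma alt_mid' x y m : odd m ->
  [:: x] ++ (alt_pow y x m./2 ++ y :: rev (alt_pow y x m./2)) = alt_pow x y m.
Proof. move=> om. by rewrite {3}(odd_m om) -alt_mid. Qed.

Lemma zred_rel x y m : x != y -> odd m ->
  zred (rel_letters (mkE (x, y, m))) = alt_pow x y m.
Proof.
move=> xy om; rewrite rel_shape zred_cat zred_sqs.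
set P := (alt_pow y x _ ++ _).
rewrite (zred_cat P) zred_sqs [zred [::]]/= cats0 -zred_cat alt_mid' //.
rewrite zred_id //; by case: (red_alt m xy).
Qed.

Lemma cyc_aux_nored n a (t : seq V) : t != [::] -> a != last a t ->
  cyc_aux n.+1 (a :: t) = a :: t.
Proof. case: t => [//|b u] _ H /=. by rewrite (negbTE H). Qed.

Lemma reduces_mkE x y m : x != y -> odd m -> reduces_to (mkE (x, y, m)) m.
Proof.
move=> xy om; exists 1; rewrite /cycred zred_rel //.
case: m om => [//|n] _. rewrite alt_S /=.
have Hl : last y (alt_pow x y n) = y by case: n => [//|n]; exact: alt_last_gen.
rewrite Hl (negbTE xy) rot1_cons.
have -> : y :: alt_pow x y n = alt_pow y x n ++ [:: y] by rewrite alt_swap.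
by rewrite alt_rcons -cats1 -catA.
Qed.

End Constr.

Theorem lemma2p4 (V : finType) (Ups : labgraph V) :
  is_tree (lab_ends Ups) ->
  (forall f, f \in Ups -> odd f.2) ->
  exists G : LOT V,
    [/\ is_tree (lot_ends G),
        (forall e, e \in G -> coxeter_type_edge e),
        prime_LOT G,
        coxeter_tree_of G Ups &
        (* G(G) -> W(Ups), x |-> x, is well defined (each relator r_e is
           trivial in W(Ups), where x^{-1} = x); it is onto as the image
           contains all generators *)
        (forall e, e \in G -> weq Ups (rel_letters e) [::])].
Proof.
move=> Htree Hodd.
exists (map (@mkE V) Ups); split.
- have -> : lot_ends (map (@mkE V) Ups) = lab_ends Ups.
    by rewrite /lot_ends /lab_ends -map_comp; apply: eq_map => -[[a b] m].
  exact: Htree.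
- move=> e /mapP[[[a b] m] Hf ->]. rewrite /coxeter_type_edge /= map_fst_w /lab.
  apply: runs_sqs.
  + by move=> z /=; rewrite orbT.
  + by rewrite filter_uniq ?enum_uniq.
  + move=> c u; case: (m./2) => [//|k] [<- _]. by rewrite mem_filter eqxx andbF.
  + apply: (sub_all _ (runs_all (Q := fun z => (z == a) || (z == b)) _)).
      by move=> [z k] /= /orP[] ->; rewrite ?orbT.
    elim: (m./2) => [//|k IH]. by rewrite alt_S /= IH !eqxx !orbT.
- move=> U [U0 [Hcon Hlet]].
  have key : forall f, f \in Ups -> f.1.1 \in U -> f.1.2 \in U -> U = setT.
    move=> [[a b] m] Hf /= Ua Ub.
    have /allP Hall := Hlet (mkE (a, b, m)) (map_f _ Hf) Ua Ub.
    apply/setP => v; rewrite inE.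
    case: (eqVneq v a) => [->//|va]; case: (eqVneq v b) => [->//|vb].
    have : (v, true) \in (mkE (a, b, m)).1.2.
      apply/mapP; exists v => //. rewrite /lab mem_cat; apply/orP; left.
      apply: mem_sqs; by rewrite mem_filter va vb mem_enum.
    by move/Hall.
  have [a Ua] : exists a, a \in U by apply/set0Pn.
  case: (pickP [pred b | (b \in U) && (b != a)]) => [b /andP[Ub ba] | H].
  + left. case/connectP: (Hcon a b Ua Ub) => [[|c p]] /=.
      by move=> _ E; rewrite E eqxx in ba.
    case/andP => /and3P[_ Uc Hadj] _ _.
    case/orP: Hadj => /mapP[e /mapP[f Hf ->]] [E1 E2].
      by apply: (key f Hf); rewrite -?E1 -?E2.
    by apply: (key f Hf); rewrite -?E1 -?E2.
  + right. have -> : U = [set a].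
      apply/setP => b; rewrite inE; apply/idP/idP => [Ub|/eqP->//].
      have := H b; rewrite /= Ub /=. by move/negbFE.
    by rewrite cards1.
- split.
  + move=> e /mapP[[[a b] m] Hf ->]. exists m; split; first by left.
    apply: reduces_mkE; last exact: (Hodd _ Hf).
    apply: (tree_noloop Htree). by apply/mapP; exists ((a, b), m).
  + move=> f Hf; exists (mkE f); split; [exact: map_f | by left].
- move=> e /mapP[[[a b] m] Hf ->]. rewrite rel_shape.
  apply: weq_trans (weq_sqs _ _ _ _) _. rewrite catA.
  apply: weq_trans (weq_sqs _ _ _ _) _. rewrite cats0 alt_mid'; last exact: (Hodd _ Hf).
  have := @weq_cox V Ups [::] [::] a b m Hf. by rewrite /= cats0.
Qed.
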